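(* Let $K$ be an algebraically closed field, let $V$ be a finite-dimensional vector space over $K$ with $\dim V\geq 4$, and let $\omega$ be an alternating trilinear form on $V$. Then every two-dimensional subspace of $V$ contains a nonzero vector lying in some two-dimensional $\omega$-singular subspace of $V$.
   Context: A two-dimensional subspace $L\subseteq V$ is $\omega$-singular if $\omega(a,b,v)=0$ for all $a,b\in L$, $v\in V$. *)

(* Defs.v *)
From HB Require Import structures.
From mathcomp Require Import all_boot all_order all_algebra.
Set Implicit Arguments. Unset Strict Implicit. Unset Printing Implicit Defensive.
Import GRing.Theory.
Local Open Scope ring_scope.

Definition trilinear (K : fieldType) (V : vectType K) (w : V -> V -> V -> K) :=
  [/\ forall (a : K) (x y b c : V), w (a *: x + y) b c = a * w x b c + w y b c,
      forall (a : K) (x y b c : V), w b (a *: x + y) c = a * w b x c + w b y c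
    & forall (a : K) (x y b c : V), w b c (a *: x + y) = a * w b c x + w b c y].

Definition alternating (K : fieldType) (V : vectType K) (w : V -> V -> V -> K) :=
  [/\ forall x y : V, w x x y = 0,
      forall x y : V, w x y y = 0
    & forall x y : V, w x y x = 0].

Definition singular (K : fieldType) (V : vectType K) (w : V -> V -> V -> K)
  (L : {vspace V}) :=
  forall a b v : V, a \in L -> b \in L -> w a b v = 0.

(* Main.v *)
Require Import Defs.
From HB Require Import structures.
From mathcomp Require Import all_boot all_order all_algebra.
Set Implicit Arguments. Unset Strict Implicit. Unset Printing Implicit Defensive.
Import GRing.Theory.
Local Open Scope ring_scope.

Lemma w1D (K : fieldType) (V : vectType K) (w : V -> V -> V -> K) :
  trilinear w -> forall x y b c, w (x + y) b c = w x b c + w y b c.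
Proof. by rewrite /trilinear; move=> [h _ _] x y b c; rewrite -{1}[x]scale1r h mul1r. Qed.
Lemma w2D (K : fieldType) (V : vectType K) (w : V -> V -> V -> K) :
  trilinear w -> forall x y b c, w b (x + y) c = w b x c + w b y c.
Proof. by rewrite /trilinear; move=> [_ h _] x y b c; rewrite -{1}[x]scale1r h mul1r. Qed.
Lemma w3D (K : fieldType) (V : vectType K) (w : V -> V -> V -> K) :
  trilinear w -> forall x y b c, w b c (x + y) = w b c x + w b c y.
Proof. by rewrite /trilinear; move=> [_ _ h] x y b c; rewrite -{1}[x]scale1r h mul1r. Qed.
Lemma w10 (K : fieldType) (V : vectType K) (w : V -> V -> V -> K) :
  trilinear w -> forall b c, w 0 b c = 0.
Proof. by move=> t b c; have := w1D t 0 0 b c; rewrite addr0 => H; apply: (addrI (w 0 b c)); rewrite addr0 -H. Qed.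
Lemma w20 (K : fieldType) (V : vectType K) (w : V -> V -> V -> K) :
  trilinear w -> forall b c, w b 0 c = 0.
Proof. by move=> t b c; have := w2D t 0 0 b c; rewrite addr0 => H; apply: (addrI (w b 0 c)); rewrite addr0 -H. Qed.
Lemma w30 (K : fieldType) (V : vectType K) (w : V -> V -> V -> K) :
  trilinear w -> forall b c, w b c 0 = 0.
Proof. by move=> t b c; have := w3D t 0 0 b c; rewrite addr0 => H; apply: (addrI (w b c 0)); rewrite addr0 -H. Qed.
Lemma w1Z (K : fieldType) (V : vectType K) (w : V -> V -> V -> K) :
  trilinear w -> forall a x b c, w (a *: x) b c = a * w x b c.
Proof. by move=> t a x b c; rewrite -[a *: x]addr0; case: (t) => [+ _ _] => ->; rewrite w10 // addr0. Qed.
Lemma w2Z (K : fieldType) (V : vectType K) (w : V -> V -> V -> K) :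
  trilinear w -> forall a x b c, w b (a *: x) c = a * w b x c.
Proof. by move=> t a x b c; rewrite -[a *: x]addr0; case: (t) => [_ + _] => ->; rewrite w20 // addr0. Qed.
Lemma w3Z (K : fieldType) (V : vectType K) (w : V -> V -> V -> K) :
  trilinear w -> forall a x b c, w b c (a *: x) = a * w b c x.
Proof. by move=> t a x b c; rewrite -[a *: x]addr0; case: (t) => [_ _ +] => ->; rewrite w30 // addr0. Qed.
Lemma w1sum (K : fieldType) (V : vectType K) (w : V -> V -> V -> K) :
  trilinear w -> forall m (c : 'I_m -> K) (e : 'I_m -> V) b d,
  w (\sum_i c i *: e i) b d = \sum_i c i * w (e i) b d.
Proof.
move=> t m c e b d; rewrite (big_morph (fun x => w x b d) (fun x y => w1D t x y b d) (w10 t b d)).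
by apply: eq_bigr => i _; rewrite w1Z.
Qed.
Lemma w2sum (K : fieldType) (V : vectType K) (w : V -> V -> V -> K) :
  trilinear w -> forall m (c : 'I_m -> K) (e : 'I_m -> V) b d,
  w b (\sum_i c i *: e i) d = \sum_i c i * w b (e i) d.
Proof.
move=> t m c e b d; rewrite (big_morph (fun x => w b x d) (fun x y => w2D t x y b d) (w20 t b d)).
by apply: eq_bigr => i _; rewrite w2Z.
Qed.
Lemma w3sum (K : fieldType) (V : vectType K) (w : V -> V -> V -> K) :
  trilinear w -> forall m (c : 'I_m -> K) (e : 'I_m -> V) b d,
  w b d (\sum_i c i *: e i) = \sum_i c i * w b d (e i).
Proof.
move=> t m c e b d; rewrite (big_morph (fun x => w b d x) (fun x y => w3D t x y b d) (w30 t b d)).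
by apply: eq_bigr => i _; rewrite w3Z.
Qed.
Lemma w12N (K : fieldType) (V : vectType K) (w : V -> V -> V -> K) :
  trilinear w -> alternating w -> forall x y c, w y x c = - w x y c.
Proof.
move=> t; rewrite /alternating => -[a1 a2 a3] x y c; have := a1 (x + y) c.
by rewrite w1D // !w2D // !a1 add0r addr0 => /eqP; rewrite addr_eq0 => /eqP ->; rewrite opprK.
Qed.
Lemma w23N (K : fieldType) (V : vectType K) (w : V -> V -> V -> K) :
  trilinear w -> alternating w -> forall b x y, w b y x = - w b x y.
Proof.
move=> t; rewrite /alternating => -[a1 a2 a3] b x y; have := a2 b (x + y).
by rewrite w2D // !w3D // !a2 add0r addr0 => /eqP; rewrite addr_eq0 => /eqP ->; rewrite opprK.
Qed.

Lemma KL (K : fieldType) (V : vectType K) (w : V -> V -> V -> K)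
  (t : trilinear w) (al : alternating w) m (x : V) (e : 'I_m -> V)
  (hspan : forall v : V, exists a : K, exists c : 'I_m -> K,
      v = a *: x + \sum_i c i *: e i)
  (hfree : forall (a : K) (c : 'I_m -> K),
      a *: x + \sum_i c i *: e i = 0 -> a = 0 /\ forall i, c i = 0)
  (hdet : \det (\matrix_(i, j) w x (e i) (e j)) = 0) :
  x != 0 /\ exists L : {vspace V}, [/\ \dim L = 2%N, x \in L & singular w L].
Proof.
have [a1 a2 a3] := al.
have /det0P [v v0 vG] : \det (\matrix_(i, j) w x (e i) (e j)) == 0 by rewrite hdet.
pose y := \sum_i v 0 i *: e i.
have hy : forall j, w x y (e j) = 0.
  move=> j; rewrite w2sum //; move: vG => /matrixP /(_ 0 j).
  rewrite !mxE => H; rewrite -[RHS]H; apply: eq_bigr => i _; by rewrite mxE.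
have hyall : forall u, w x y u = 0.
  move=> u; have [a [c ->]] := hspan u.
  rewrite w3D // w3Z // w3sum // a3 mulr0 add0r big1 // => i _.
  by rewrite hy mulr0.
have x0 : x != 0.
  apply/eqP => x0; have := hfree 1 (fun _ => 0).
  rewrite x0 scaler0 big1 ?addr0 => [/(_ erefl) [/eqP]|i _].
    by rewrite oner_eq0.
  by rewrite scale0r.
have [i0 vi0] : exists i, v 0 i != 0.
  case: (pickP (fun i => v 0 i != 0)) => [i hi | h]; first by exists i.
  move: v0; have -> : v = 0.
    by apply/rowP => j; rewrite mxE; have := h j => /negbFE/eqP.
  by rewrite eqxx.
have fr : free [:: x; y].
  suff : free [tuple x; y] by []. apply/freeP => k hk.
  rewrite !big_ord_recl big_ord0 /= addr0 in hk.
  move: hk; rewrite /y scaler_sumr.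
  under eq_bigr => i _ do rewrite scalerA.
  move=> /hfree [k0 hk1].
  have k1 : k (lift ord0 ord0) = 0.
    by have /eqP := hk1 i0; rewrite mulf_eq0 (negbTE vi0) orbF => /eqP.
  move=> i; case: (unliftP ord0 i) => [j -> | ->] //.
  by rewrite (ord1 j).
split => //; exists <<[:: x; y]>>%VS; split.
- by move: fr; rewrite /free => /eqP ->.
- by apply: memv_span; rewrite mem_head.
move=> a b u ha hb.
have hXX : forall i j : 'I_2, w [tuple x; y]`_i [tuple x; y]`_j u = 0.
  move=> [[|[|i']] hi] [[|[|j']] hj] //=.
  - by rewrite w12N // hyall oppr0.
have ha' : a \in span [tuple x; y] by [].
have hb' : b \in span [tuple x; y] by [].
rewrite (coord_span ha') w1sum // big1 // => i _.
rewrite (coord_span hb') w2sum // big1 ?mulr0 // => j _.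
by rewrite hXX mulr0.
Qed.

Lemma POLY (K : fieldType) m (M0 M1 : 'M[K]_m) :
  exists g : {poly K}, forall s, g.[s] = \det (M0 + s *: M1).
Proof.
exists (\det (map_mx polyC M0 + 'X *: map_mx polyC M1)) => s.
rewrite -horner_evalE -det_map_mx; congr (\det _); apply/matrixP => i j.
by rewrite !mxE /= horner_evalE !hornerE.
Qed.

Lemma NZ (K : closedFieldType) (h : {poly K}) :
  (forall s, s != 0 -> h.[s] = 0) -> h = 0.
Proof.
move=> H; apply/eqP; apply/negPn/negP => hn.
have : 'X * h != 0 by rewrite mulf_neq0 ?polyX_eq0.
case/closed_nonrootP => s; rewrite /root hornerM hornerX mulf_eq0 negb_or.
by case/andP => s0 hs; rewrite H ?eqxx in hs.
Qed.

Lemma BASIS (K : fieldType) (V : vectType K) (P : {vspace V}) :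
  \dim P = 2%N -> exists p q : V, exists k, exists u : 'I_k -> V,
  [/\ k = (\dim (fullv : {vspace V}) - 2)%N, p \in P, q \in P,
   (forall v, exists a b, exists c : 'I_k -> K,
       v = a *: p + b *: q + \sum_i c i *: u i) &
   (forall a b (c : 'I_k -> K), a *: p + b *: q + \sum_i c i *: u i = 0 ->
       [/\ a = 0, b = 0 & forall i, c i = 0])].
Proof.
move=> hP.
have [p [q hb]] : exists p q, basis_of P [:: p; q].
  have := vbasisP P; move: (tval (vbasis P)) (size_tuple (vbasis P)) => X.
  by rewrite hP; case: X => [|p [|q [|]]] //= _ hb; exists p, q.
have fpq := basis_free hb.
have spq := span_basis hb.
pose U := (P^C)%VS.
exists p, q, (\dim U), (fun i => (vbasis U)`_i); split.
- by rewrite dimv_compl hP.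
- by rewrite -spq memv_span // mem_head.
- by rewrite -spq memv_span // !inE eqxx orbT.
- move=> v; have : v \in (P + U)%VS by rewrite addv_complf memvf.
  case/memv_addP => vp hvp [vu hvu ->].
  have hvp' : vp \in span [tuple p; q] by rewrite spq.
  rewrite (coord_span hvp') (coord_vbasis hvu) !big_ord_recl big_ord0 addr0 /=.
  by do 3 eexists.
- move=> a b c H.
  have hvp : a *: p + b *: q \in P.
    by rewrite -spq rpredD // rpredZ // memv_span // !inE eqxx ?orbT.
  have hvu : \sum_i c i *: (vbasis U)`_i \in U.
    by apply: rpred_sum => i _; rewrite rpredZ // vbasis_mem // mem_nth // size_tuple.
  have hvp0 : a *: p + b *: q = 0.
    apply/eqP; rewrite -memv0 -(capv_compl P) memv_cap hvp /=.
    by rewrite -[a *: p + b *: q]opprK (addr0_eq H) rpredN.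
  have hvu0 : \sum_i c i *: (vbasis U)`_i = 0 by move: H; rewrite hvp0 add0r.
  have /freeP fT : free [tuple p; q] by [].
  have := fT (fun i : 'I_2 => if i == ord0 then a else b).
  rewrite !big_ord_recl big_ord0 /= addr0 => /(_ hvp0) hk.
  split; [exact: (hk ord0) | exact: (hk (lift ord0 ord0)) |].
  move/freeP : (basis_free (vbasisP U)) => fU i; exact: (fU c hvu0 i).
Qed.

Definition ext (K : fieldType) (V : vectType K) k (z : V) (u : 'I_k -> V) :=
  fun i : 'I_k.+1 => if unlift ord0 i is Some j then u j else z.

Lemma ext_sum (K : fieldType) (V : vectType K) k (z : V) (u : 'I_k -> V)
  (c : 'I_k.+1 -> K) :
  \sum_i c i *: ext z u i = c ord0 *: z + \sum_j c (lift ord0 j) *: u j.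
Proof.
rewrite big_ord_recl /ext unlift_none; congr (_ + _).
by apply: eq_bigr => j _; rewrite liftK.
Qed.

Lemma SHIFT (K : fieldType) (V : vectType K) k (p q : V) (u : 'I_k -> V) s
  (sp : forall v, exists a b, exists c : 'I_k -> K,
       v = a *: p + b *: q + \sum_i c i *: u i)
  (fr : forall a b (c : 'I_k -> K), a *: p + b *: q + \sum_i c i *: u i = 0 ->
       [/\ a = 0, b = 0 & forall i, c i = 0]) :
  (forall v : V, exists a : K, exists c : 'I_k.+1 -> K,
      v = a *: (s *: p + q) + \sum_i c i *: ext p u i) /\
  (forall (a : K) (c : 'I_k.+1 -> K),
      a *: (s *: p + q) + \sum_i c i *: ext p u i = 0 -> a = 0 /\ forall i, c i = 0).
Proof.
split.
  move=> v; have [a [b [c ->]]] := sp v.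
  exists b, (fun i => if unlift ord0 i is Some j then c j else a - b * s).
  rewrite ext_sum unlift_none.
  under [in RHS]eq_bigr => j _ do rewrite liftK.
  rewrite scalerDr scalerA scalerBl addrA.
  by congr (_ + _); rewrite [RHS]addrAC (addrC ((b * s) *: p)) addrNK.

move=> a c; rewrite ext_sum scalerDr scalerA addrA (addrAC ((a * s) *: p)) -scalerDl => /fr [h1 h2 h3].
have ha : a = 0 by []. have hc0 : c ord0 = 0 by move: h1; rewrite ha mul0r add0r.
split => // i; case: (unliftP ord0 i) => [j -> | ->] //.
Qed.

Lemma HOM (K : fieldType) (V : vectType K) (w : V -> V -> V -> K)
  (t : trilinear w) (al : alternating w) k (p q : V) (u : 'I_k -> V) (s : K) :
  (0 < k)%N -> s != 0 ->
  \det (\matrix_(i, j) w (s *: p + q) (ext p u i) (ext p u j)) =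
  s ^+ k.-1 * \det (\matrix_(i, j) w (s^-1 *: q + p) (ext q u i) (ext q u j)).
Proof.
move=> k0 s0; have [a1 a2 a3] := al.
pose x' := s^-1 *: q + p.
have hx : s *: p + q = s *: x'.
  by rewrite /x' scalerDr scalerA mulfV // scale1r addrC.
pose d : 'rV[K]_k.+1 := \row_i (if i == ord0 then - s^-1 else 1).
have hw2 : forall i c, w x' (ext p u i) c = d 0 i * w x' (ext q u i) c.
  move=> i c; rewrite /d mxE /ext; case: (unliftP ord0 i) => [j -> | ->].
    by rewrite eq_sym (negbTE (neq_lift _ _)) mul1r.
  rewrite eqxx /x' !w1D // !w1Z // a1 addr0 a1 mulr0 add0r.
  by rewrite w12N // mulrN mulNr.
have hw3 : forall j c, w x' c (ext p u j) = d 0 j * w x' c (ext q u j).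
  by move=> j c; rewrite w23N // hw2 (w23N t al x' c (ext q u j)) mulrN opprK.
have hM : (\matrix_(i, j) w (s *: p + q) (ext p u i) (ext p u j)) =
    s *: (diag_mx d *m (\matrix_(i, j) w x' (ext q u i) (ext q u j)) *m diag_mx d).
  apply/matrixP => i j; rewrite /d mul_mx_diag mul_diag_mx !mxE hx w1Z // hw2 hw3.
  by rewrite /d !mxE -mulrA [_ * (if j == _ then _ else _)]mulrC.
rewrite hM detZ !det_mulmx det_diag big_ord_recl big1 => [|i _]; last first.
  by rewrite mxE.
rewrite mxE eqxx mulr1.
case: k k0 u d hw2 hw3 hM => // k' _ u d _ _ _.
have E : s ^+ k'.+2 = s ^+ k' * s ^+ 2 by rewrite -exprD addn2.
rewrite (mulrAC (- s^-1)) mulrNN -expr2 exprVn E -mulrA mulVKf ?expf_neq0 //.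
Qed.

Lemma GPOLY (K : fieldType) (V : vectType K) (w : V -> V -> V -> K)
  (t : trilinear w) k (a b : V) (e : 'I_k -> V) :
  exists g : {poly K}, forall s,
    g.[s] = \det (\matrix_(i, j) w (s *: a + b) (e i) (e j)).
Proof.
have [g hg] := POLY (\matrix_(i, j) w b (e i) (e j)) (\matrix_(i, j) w a (e i) (e j)).
exists g => s; rewrite hg; congr (\det _); apply/matrixP => i j.
by rewrite !mxE; case: t => h _ _; rewrite h addrC.
Qed.

Unset Implicit Arguments.

Theorem mainTheorem6 (K : closedFieldType) (V : vectType K)
  (w : V -> V -> V -> K) :
  (4 <= \dim (fullv : {vspace V}))%N ->
  trilinear w -> alternating w ->
  forall P : {vspace V}, \dim P = 2%N ->
  exists2 x : V, (x \in P) && (x != 0) &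
    exists L : {vspace V}, [/\ \dim L = 2%N, x \in L & singular w L].
Proof.
move=> hn tw al P hP.
have [p [q [k [u [hk pP qP sp fr]]]]] := BASIS hP.
have k2 : (2 <= k)%N by rewrite hk ltn_subRL.
have sp' : forall v, exists a b, exists c : 'I_k -> K,
    v = a *: q + b *: p + \sum_i c i *: u i.
  by move=> v; have [a [b [c ->]]] := sp v; exists b, a, c; rewrite (addrC (a *: p)).
have fr' : forall a b (c : 'I_k -> K), a *: q + b *: p + \sum_i c i *: u i = 0 ->
    [/\ a = 0, b = 0 & forall i, c i = 0].
  by move=> a b c; rewrite (addrC (a *: q)) => /fr [h1 h2 h3].
have [f hf] := GPOLY tw p q (ext p u).
have [g hg] := GPOLY tw q p (ext q u).
have hKL1 : forall s,
    \det (\matrix_(i, j) w (s *: p + q) (ext p u i) (ext p u j)) = 0 ->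
    exists2 x : V, (x \in P) && (x != 0) &
    exists L : {vspace V}, [/\ \dim L = 2%N, x \in L & singular w L].
  move=> s hd; have [hs hfr] := SHIFT s sp fr.
  have [x0 [L hL]] := KL tw al hs hfr hd.
  by exists (s *: p + q); [rewrite x0 rpredD ?rpredZ | exists L].
have hKL2 : forall s,
    \det (\matrix_(i, j) w (s *: q + p) (ext q u i) (ext q u j)) = 0 ->
    exists2 x : V, (x \in P) && (x != 0) &
    exists L : {vspace V}, [/\ \dim L = 2%N, x \in L & singular w L].
  move=> s hd; have [hs hfr] := SHIFT s sp' fr'.
  have [x0 [L hL]] := KL tw al hs hfr hd.
  by exists (s *: q + p); [rewrite x0 rpredD ?rpredZ | exists L].
case: (boolP (size f != 1%N)) => [/closed_rootP [s0 /rootP r] | /negPn /size_poly1P [c c0 fc]].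
  by apply: (hKL1 s0); rewrite -hf.
apply: (hKL2 0).
have hgt : forall t, t != 0 -> g.[t] = c * t ^+ k.-1.
  move=> t t0; move: (HOM tw al p q u (ltnW k2) (invr_neq0 t0)).
  rewrite invrK -hf -hg fc hornerC => ->.
  by rewrite exprVn [_ * g.[t]]mulrC mulfVK ?expf_neq0.
have hg0 : g = c *: 'X^(k.-1).
  apply/eqP; rewrite -subr_eq0; apply/eqP; apply: NZ => t t0.
  by rewrite hornerD hornerN hornerZ hornerXn hgt // subrr.
rewrite -hg hg0 hornerZ hornerXn expr0n.
by case: k {hk sp fr sp' fr' u hKL1 hKL2 hf hg hgt hg0 f fc} k2 => [|[|k']] //= _; rewrite mulr0.
Qed.
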